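(* Let $D$ be an Egyptian domain with fraction field $K$, and let $x$ be an indeterminate. For a subring $A$ of $K(x)$ with fraction field $K(x)$, let $R(A)$ denote the subring of $K(x)$ generated by $\{1/a \mid a \in A\setminus\{0\}\}$. Then $R(D[x]) = R(K[x])$. Consequently, $D[x]$ is Bonaccian.
   Context: For an integral domain $A$ with fraction field $L$, an element of $L$ is $A$-Egyptian if it is a sum of reciprocals of distinct nonzero elements of $A$. $A$ is Egyptian if every nonzero element of $L$ is $A$-Egyptian, and $A$ is Bonaccian if for every nonzero $\alpha\in L$, either $\alpha$ or $\alpha^{-1}$ is $A$-Egyptian. *)

(* Defs.v *)
From HB Require Import structures.
From mathcomp Require Import all_boot all_algebra.
Set Implicit Arguments. Unset Strict Implicit. Unset Printing Implicit Defensive.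
Import GRing.Theory.
Local Open Scope ring_scope.

Definition tofrac (A : idomainType) : A -> {fraction A} := @FracField.tofrac A.

Definition egyptian_elt (A : idomainType) (alpha : {fraction A}) : Prop :=
  exists s : seq A, [/\ uniq s, all (fun a => a != 0) s &
                        alpha = \sum_(a <- s) (tofrac a)^-1].

Definition Egyptian (A : idomainType) : Prop :=
  forall alpha : {fraction A}, alpha != 0 -> egyptian_elt alpha.

Definition Bonaccian (A : idomainType) : Prop :=
  forall alpha : {fraction A}, alpha != 0 ->
    egyptian_elt alpha \/ egyptian_elt alpha^-1.

Definition gen_subring (L : nzRingType) (S : L -> Prop) (z : L) : Prop :=
  forall P : L -> Prop,
    P 1 -> (forall u v, P u -> P v -> P (u - v)) ->
    (forall u v, P u -> P v -> P (u * v)) ->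
    (forall y, S y -> P y) -> P z.

Definition Rrecip (L : fieldType) (A : L -> Prop) : L -> Prop :=
  gen_subring (fun y => exists2 a, A a & (a != 0) /\ y = a^-1).

(* K(x) = {fraction {poly {fraction D}}}, with its subrings K[x] and D[x]. *)
Definition Kx (D : idomainType) := {fraction {poly {fraction D}}}.

Definition polyK_in (D : idomainType) (y : Kx D) : Prop :=
  exists p : {poly {fraction D}}, y = tofrac p.

Definition polyD_in (D : idomainType) (y : Kx D) : Prop :=
  exists p : {poly D}, y = tofrac (map_poly (@tofrac D) p).

(* Main.v *)
Require Import Defs.
From HB Require Import structures.
From mathcomp Require Import all_boot all_algebra.
Import GRing.Theory.
Local Open Scope ring_scope.
Local Open Scope quotient_scope.
Lemma tofracE (R : idomainType) (a : R) : FracField.tofrac a = \pi_({fraction R}) (Ratio a 1).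
Proof. by rewrite /FracField.tofrac; unlock. Qed.

Lemma frac_repr (R : idomainType) (x : {fraction R}) :
  exists a b : R, b != 0 /\ x = (FracField.tofrac a) / (FracField.tofrac b).
Proof.
elim/quotP: x => r _.
have hd : (r : R * R).2 != 0 by case: r.
exists (r : R * R).1, (r : R * R).2; split => //.
apply: (canRL (mulfK _)); first by rewrite tofrac_eq0.
rewrite !tofracE.
rewrite -[_ * _]/(FracField.mul _ _) -FracField.pi_mul /FracField.mulf /=.
apply/eqP; rewrite FracField.equivf_def /=.
rewrite !numden_Ratio ?mulf_neq0 ?oner_eq0 //=.
by rewrite !mulr1 mulrC.
Qed.

Lemma comm4 (R : comNzRingType) (a b p x : R) : a * b * (p * x) = b * (a * p) * x.
Proof. by rewrite !mulrA [a * b]mulrC. Qed.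

Lemma polyC4 (K : fieldType) (d b a : K) : b != 0 ->
  (d%:P * b%:P * (a%:P * (b^-1)%:P) : {poly K}) = d%:P * a%:P.
Proof. by move=> b0; rewrite -!polyCM mulrACA mulfV // mulr1. Qed.

Lemma clear_denom (D : idomainType) (p : {poly {fraction D}}) :
  exists (d : D) (g : {poly D}), d != 0 /\
    (FracField.tofrac d)%:P * p = map_poly (@FracField.tofrac D) g.
Proof.
elim/poly_ind: p => [|p c [d [g [hd IH]]]].
  by exists 1, 0; rewrite oner_eq0 mulr0 rmorph0.
have [a [b [hb ->]]] := frac_repr _ c.
exists (d * b), (b%:P * g * 'X + (d * a)%:P); split; first by rewrite mulf_neq0.
rewrite rmorphD !rmorphM /= !map_polyC map_polyX /= -IH.
rewrite mulrDr.
have tb : FracField.tofrac b != 0 by rewrite tofrac_eq0.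
congr (_ + _).
  exact: comm4.
exact: polyC4.
Qed.
Lemma split_frac (L : fieldType) (a b e : L) : b != 0 -> e != 0 ->
  (a * e - b) / (b * e) = a / b - e^-1.
Proof.
move=> hb he; rewrite invfM mulrBl mulrACA mulfV // mulr1.
by rewrite mulrA mulfV // mul1r.
Qed.

Lemma transfer (D : idomainType) (L : fieldType) (f : D -> L)
  (fB : forall x y, f (x - y) = f x - f y) (fM : forall x y, f (x * y) = f x * f y)
  (f0 : forall x, (f x == 0) = (x == 0)) (E : seq D) :
  all (fun e => e != 0) E ->
  forall a b, b != 0 ->
  FracField.tofrac a / FracField.tofrac b = \sum_(e <- E) (FracField.tofrac e)^-1 ->
  f a / f b = \sum_(e <- E) (f e)^-1.
Proof.
elim: E => [|e E IH] /= hE a b hb.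
  rewrite !big_nil => /eqP; rewrite mulf_eq0 invr_eq0 !tofrac_eq0 (negbTE hb) orbF.
  by move/eqP->; have := f0 0; rewrite eqxx => /eqP ->; rewrite mul0r.
case/andP: hE => he hE; rewrite !big_cons => h.
have fb : f b != 0 by rewrite f0.
have fe : f e != 0 by rewrite f0.
have tb : FracField.tofrac b != 0 by rewrite tofrac_eq0.
have te : FracField.tofrac e != 0 by rewrite tofrac_eq0.
have := IH hE (a * e - b) (b * e) (mulf_neq0 hb he).
rewrite !tofracB !tofracM fB !fM !split_frac // h addrC addKr.
by move=> /(_ erefl) H; rewrite -H addrC subrK.
Qed.
Lemma inv_eq (L : fieldType) (x y z : L) : y != 0 -> z != 0 -> x * y = z -> y^-1 = x / z.
Proof.
move=> y0 z0 e; have x0 : x != 0 by apply/eqP => x0; move: z0; rewrite -e x0 mul0r eqxx.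
by rewrite -e invfM mulrA mulfV // mul1r.
Qed.

Lemma P_sum (L : nzRingType) (P : L -> Prop) : P 1 ->
  (forall u v, P u -> P v -> P (u - v)) ->
  forall (I : Type) (s : seq I) (F : I -> L), (forall i, P (F i)) ->
  P (\sum_(i <- s) F i).
Proof.
move=> P1 PB I s F PF.
have P0 : P 0 by rewrite -(subrr 1); apply PB.
elim: s => [|i s IH]; first by rewrite big_nil.
rewrite big_cons -[X in F i + X]opprK -[X in F i + - X]sub0r.
by apply PB => //; apply PB.
Qed.

Lemma part1 (D : idomainType) : Egyptian D ->
  (forall z : Kx D, Rrecip (@polyD_in D) z <-> Rrecip (@polyK_in D) z).
Proof.
move=> HE z; rewrite /Rrecip /gen_subring; split => H P P1 PB PM PS.
  apply: H => // y [a ha [a0 ->]]; apply: PS; exists a => //.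
  by case: ha => p ->; exists (map_poly (@FracField.tofrac D) p).
apply: H => // y [a [p ->] [a0 ->]].
have [d [g [hd hg]]] := clear_denom _ p.
pose T := @FracField.tofrac {poly {fraction D}}.
have p0 : p != 0 by move: a0; rewrite /tofrac tofrac_eq0.
have tdP : (FracField.tofrac d)%:P != 0 :> {poly {fraction D}}.
  by rewrite polyC_eq0 tofrac_eq0.
have g0 : map_poly (@FracField.tofrac D) g != 0.
  by rewrite -hg mulf_neq0.
have Tg0 : T (map_poly (@FracField.tofrac D) g) != 0 by rewrite tofrac_eq0.
have Tp0 : T p != 0 by rewrite tofrac_eq0.
have -> : (tofrac p)^-1 = T (FracField.tofrac d)%:P * (T (map_poly (@FracField.tofrac D) g))^-1.
  have key : T (FracField.tofrac d)%:P * T p = T (map_poly (@FracField.tofrac D) g).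
    by rewrite -tofracM hg.
  exact: (@inv_eq _ _ _ _ Tp0 Tg0 key).
have td0 : FracField.tofrac d != 0 by rewrite tofrac_eq0.
have [E [uE nE hE]] := HE (FracField.tofrac d) td0.
pose f := fun x : D => T (FracField.tofrac x)%:P.
have fB : forall x1 y1, f (x1 - y1) = f x1 - f y1.
  by move=> x1 y1; rewrite /f /T /= tofracB polyCB tofracB.
have fM : forall x1 y1, f (x1 * y1) = f x1 * f y1.
  by move=> x1 y1; rewrite /f /T /= tofracM polyCM tofracM.
have f0 : forall x1, (f x1 == 0) = (x1 == 0).
  by move=> x1; rewrite /f /T /= tofrac_eq0 polyC_eq0 tofrac_eq0.
have := @transfer _ _ f fB fM f0 E nE d 1 (oner_neq0 _).
rewrite tofrac1 divr1 -hE => /(_ erefl).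
have -> : f 1 = 1 by rewrite /f /T /= tofrac1 tofrac1.
rewrite divr1 => hf.
have hf' : T (FracField.tofrac d)%:P = \sum_(e <- E) (f e)^-1 := hf.
rewrite hf'.
apply PM; last first.
  apply PS.
  exists (T (map_poly (@FracField.tofrac D) g)).
    by exists g.
  split; [exact: Tg0 | reflexivity].
apply: P_sum => // e.
case: (boolP (e == 0)) => [/eqP -> | e0].
  rewrite /f /T /= tofrac0 tofrac0 invr0 -(subrr 1); apply PB; exact P1.
apply PS; exists (f e).
  by exists e%:P; rewrite /f /T /= map_polyC.
split; [by rewrite f0 | reflexivity].
Qed.


From mathcomp Require Import ring zify.

Lemma alg (L : fieldType) (r q s c r' : L) : q != 0 -> s != 0 -> c * q = s * r + r' -> r / q = c / s + r' / (-(q*s)).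
Proof.
move=> q0 s0 h.
have -> : r' = c * q - s * r by rewrite h addrC addKr.
field.
by rewrite ?oppr_eq0 ?mulf_neq0 ?q0 ?s0 ?c0.
Qed.
Lemma alg2 (L : fieldType) (p q cp cq r : L) : q != 0 -> cq != 0 -> cq * p = cp * q + r -> p / q = cp / cq + r / (cq * q).
Proof.
move=> q0 c0 h.
have -> : r = cq * p - cp * q by rewrite h addrC addKr.
field.
by rewrite ?oppr_eq0 ?mulf_neq0 ?q0 ?s0 ?c0.
Qed.

Lemma L1 (q r r' s0 : nat) : (r' < r -> r < q -> 0 < s0 -> r' < (q + s0).-1)%N.
Proof. lia. Qed.
Lemma L2 (q r r' s0 : nat) : (r' < r -> r < q -> 0 < s0 -> (q + s0).-1 - r' < s0 -> False)%N.
Proof. lia. Qed.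
Lemma L3 (q r s0 : nat) : (q = (s0 + r).-1 -> r < q -> q - r < s0)%N.
Proof. lia. Qed.
Lemma L4 (q r r' s0 f : nat) : ((q + s0).-1 - r' < f -> r' < r -> r < q -> q = (s0 + r).-1 -> q - r < f)%N.
Proof. lia. Qed.
Lemma L5 (r r' s0 : nat) : (r' < r -> 0 < s0 -> r' < (s0 + r).-1)%N.
Proof. lia. Qed.
Lemma L6 (n r r' : nat) : (r <= n.+1 -> r' < r -> r' <= n)%N.
Proof. lia. Qed.

Lemma egC (D : idomainType) (HE : Egyptian D) (a b : D) : a != 0 -> b != 0 ->
  exists E : seq D, [/\ uniq E, all (fun e => e != 0) E &
    FracField.tofrac (a%:P : {poly D}) / FracField.tofrac (b%:P : {poly D})
    = \sum_(e <- E) (FracField.tofrac (e%:P : {poly D}))^-1].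
Proof.
move=> a0 b0.
have al0 : FracField.tofrac a / FracField.tofrac b != 0.
  by rewrite mulf_neq0 ?invr_eq0 ?tofrac_eq0.
have [E [uE nE hE]] := HE _ al0.
exists E; split => //.
pose f := fun x : D => FracField.tofrac (x%:P : {poly D}).
have fB : forall x y, f (x - y) = f x - f y.
  by move=> x y; rewrite /f polyCB tofracB.
have fM : forall x y, f (x * y) = f x * f y.
  by move=> x y; rewrite /f polyCM tofracM.
have f0 : forall x, (f x == 0) = (x == 0).
  by move=> x; rewrite /f tofrac_eq0 polyC_eq0.

exact: (@transfer _ _ f fB fM f0 E nE a b b0 hE).
Qed.

Lemma proper (D : idomainType) (HE : Egyptian D) n : forall r q : {poly D},
  (size r <= n)%N -> q != 0 -> (size r < size q)%N ->
  exists s : seq {poly D}, [/\ uniq s, all (fun f : {poly D} => f != 0) s,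
    all (fun f : {poly D} => (size q - size r < size f)%N) s &
    FracField.tofrac r / FracField.tofrac q = \sum_(f <- s) (FracField.tofrac f)^-1].
Proof.
elim: n => [|n IH] r q hr q0 hrq; case: (eqVneq r 0) => [-> | r0].
- by exists [::]; rewrite big_nil tofrac0 mul0r.
- by move: hr; rewrite size_poly_leq0 (negbTE r0).
- by exists [::]; rewrite big_nil tofrac0 mul0r.
pose c := lead_coef r ^+ scalp q r.
pose s0 : {poly D} := q %/ r.
pose r' : {poly D} := q %% r.
have hdiv : c *: q = s0 * r + r' := Pdiv.Idomain.divp_eq q r.
have c0 : c != 0 by rewrite expf_neq0 // lead_coef_eq0.
have hr' : (size r' < size r)%N := Pdiv.Idomain.ltn_modpN0 q r0.
have s00 : s0 != 0.
  apply/negP => /eqP e0; move: hdiv; rewrite e0 mul0r add0r => e1.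
  have := size_scale q c0; rewrite e1 => e2.
  by move: (ltn_trans hr' hrq); rewrite e2 ltnn.
have hsr : size (s0 * r) = (size s0 + size r).-1 by rewrite size_mul.
have s0pos : (0 < size s0)%N by rewrite size_poly_gt0.
have hsz : size q = (size s0 + size r).-1.
  by rewrite -(size_scale q c0) hdiv size_polyDl // hsr; apply: L5 _ _ _ hr' s0pos.
pose q' : {poly D} := - (q * s0).
have q'0 : q' != 0 by rewrite oppr_eq0 mulf_neq0.
have hq' : size q' = (size q + size s0).-1 by rewrite size_polyN size_mul.
have [s' [u' n' b' e']] := IH r' q' (L6 _ _ _ hr hr') q'0 (ltac:(rewrite hq'; exact: L1 _ _ _ _ hr' hrq s0pos)).
have [E [uE nE hE]] := egC _ HE c (1:D) c0 (oner_neq0 _).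
exists ([seq e%:P * s0 | e <- E] ++ s'); split.
- rewrite cat_uniq u' andbT map_inj_uniq //; last first.
    by move=> x y /(mulIf s00) /polyC_inj.
  rewrite uE /=; apply/hasPn => f fs'; apply/mapP => [[e eE fe]].
  have := allP b' f fs'; rewrite fe size_Cmul; last by have := allP nE e eE.
  rewrite hq'; exact: L2 _ _ _ _ hr' hrq s0pos.
- rewrite all_cat n' andbT; apply/allP => f /mapP [e eE ->].
  by rewrite mulf_neq0 // polyC_eq0; have := allP nE e eE.
- rewrite all_cat; apply/andP; split.
    apply/allP => f /mapP [e eE ->]; rewrite size_Cmul; last by have := allP nE e eE.
    exact: L3 _ _ _ hsz hrq.
  apply/allP => f fs'; have := allP b' f fs'; rewrite hq' => h.
  exact: L4 _ _ _ _ _ h hr' hrq hsz.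
rewrite big_cat big_map /= -e'.
have -> : \sum_(e <- E) (FracField.tofrac (e%:P * s0))^-1 =
   (\sum_(e <- E) (FracField.tofrac (e%:P : {poly D}))^-1) * (FracField.tofrac s0)^-1.
  rewrite mulr_suml; apply: eq_bigr => e _.
  by rewrite tofracM invfM.
rewrite -hE tofrac1 divr1 /q' tofracN tofracM.
apply: alg; rewrite ?tofrac_eq0 //.
by rewrite -tofracM -tofracM -tofracD -hdiv mul_polyC.
Qed.

Lemma L7 (a j : nat) : (0 < a -> a.-1 < j -> a <= j)%N.
Proof. lia. Qed.

Lemma main2 (D : idomainType) (HE : Egyptian D) (p q : {poly D}) :
  p != 0 -> q != 0 -> (size p <= size q)%N ->
  egyptian_elt (FracField.tofrac p / FracField.tofrac q).
Proof.
move=> p0 q0; rewrite leq_eqVlt => /orP [/eqP hp | hlt]; last first.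
  have [s [us ns _ es]] := proper _ HE _ _ _ (leqnn (size p)) q0 hlt.
  by exists s; split.
pose r : {poly D} := lead_coef q *: p - lead_coef p *: q.
have lq0 : lead_coef q != 0 by rewrite lead_coef_eq0.
have lp0 : lead_coef p != 0 by rewrite lead_coef_eq0.
have sq0 : (0 < size q)%N by rewrite size_poly_gt0.
have hr : (size r < size q)%N.
  suff : (size r <= (size q).-1)%N by move/leq_ltn_trans; apply; rewrite prednK.
  apply/leq_sizeP => j; rewrite leq_eqVlt => /orP [/eqP <- | hj].
    rewrite coefB !coefZ -{1}hp -!lead_coefE.
    by rewrite mulrC subrr.
  have hj' := L7 _ _ sq0 hj.
  rewrite coefB !coefZ.
  have /leq_sizeP -> := leqnn (size q); last by [].
  by have /leq_sizeP -> := leqnn (size p); rewrite ?mulr0 ?subrr // hp.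
pose q2 : {poly D} := (lead_coef q)%:P * q.
have q20 : q2 != 0 by rewrite mulf_neq0 // polyC_eq0.
have hq2 : size q2 = size q by rewrite size_Cmul.
have [s [us ns bs es]] := proper _ HE _ _ _ (leqnn (size r)) q20 (ltac:(by rewrite hq2)).
have [E [uE nE hE]] := egC _ HE _ _ lp0 lq0.
exists ([seq e%:P | e <- E] ++ s); split.
- rewrite cat_uniq us andbT map_inj_uniq; last exact: polyC_inj.
  rewrite uE /=; apply/hasPn => f fs; apply/mapP => [[e eE fe]].
  have := allP bs f fs; rewrite fe hq2 => h.
  have : (size (e%:P : {poly D}) <= 1)%N by apply: size_polyC_leq1.
  by move=> h2; move: (leq_trans h h2); rewrite ltnS leqn0 subn_eq0 leqNgt hr.
- rewrite all_cat ns andbT; apply/allP => f /mapP [e eE ->].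
  by rewrite polyC_eq0; have := allP nE e eE.
rewrite big_cat big_map /= -es -hE /q2 tofracM.
apply: alg2; rewrite ?tofrac_eq0 ?polyC_eq0 //.
by rewrite -!tofracM -tofracD /r !mul_polyC addrC subrK.
Qed.
Theorem proposition2p15 (D : idomainType) :
  Egyptian D ->
  (forall z : Kx D, Rrecip (@polyD_in D) z <-> Rrecip (@polyK_in D) z)
  /\ Bonaccian {poly D}.
Proof.
move=> HE; split; first exact: part1.
move=> alpha a0.
have [p [q [q0 ea]]] := frac_repr _ alpha.
have p0 : p != 0.
  by apply/negP => /eqP pz; move: a0; rewrite ea pz tofrac0 mul0r eqxx.
case: (leqP (size p) (size q)) => h.
  by left; rewrite ea; apply: main2.
right; rewrite ea invf_div; apply: main2 => //; exact: ltnW.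
Qed.
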